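(* Let $p$ be an odd prime and let $H\le\mathrm{S}_n$, $n=pk$, have orbits $\Omega_1,\dots,\Omega_k$ each of size $p$ such that each $D_i:=H|_{\Omega_i}$ is permutation isomorphic to the dihedral group $\mathrm{D}_{2p}$ of order $2p$ in its natural action of degree $p$. Let $D=D_1\times\dots\times D_k\le\mathrm{S}_n$, let $G_i$ be the Sylow $p$-subgroup of $D_i$, $G=G_1\times\dots\times G_k\le\mathrm{S}_n$, and for $q\in\{2,p\}$ let $H_q$ be a Sylow $q$-subgroup of $H$. Then: (1) $H=H_p\rtimes H_2=(H\cap G)\rtimes H_2$, and so $N_{\mathrm{S}_n}(H)\le N_{\mathrm{S}_n}(H_p)$; (2) $H_p$ is a subdirect product of $G$ (each projection $H_p\to G_i$ is surjective), and so $H_p$ has orbits $\Omega_1,\dots,\Omega_k$ with each $H_p|_{\Omega_i}$ cyclic of order $p$; (3) for every $i$ there exists $\alpha_i\in\Omega_i$ such that $H_2|_{\Omega_i}=(D_i)_{\alpha_i}$.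
   Context: Subgroups of $\mathrm{Sym}(\Omega_i)$ are regarded as subgroups of $\mathrm{S}_n$ supported on $\Omega_i$. $(D_i)_{\alpha_i}$ is the stabiliser of $\alpha_i$ in $D_i$. *)

(* Defs.v *)
From mathcomp Require Import all_boot all_fingroup all_solvable.
Set Implicit Arguments. Unset Strict Implicit. Unset Printing Implicit Defensive.

(* The dihedral group D_{2p} in its natural action of degree p, realised on
   'I_p = {0,...,p-1} (the vertices of a regular p-gon): the maps
   x |-> b + x (rotations) and x |-> b - x (reflections), mod p. *)
Definition dihedral_nat (p : nat) : {set {perm 'I_p}} :=
  [set s : {perm 'I_p} |
     [exists b : 'I_p, [forall x : 'I_p, val (s x) == (b + x) %% p]]
  || [exists b : 'I_p, [forall x : 'I_p, val (s x) == (b + (p - x)) %% p]]].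

Definition perm_iso_dihedral (p n : nat) (A : {set 'I_n})
    (K : {set {perm 'I_n}}) : Prop :=
  exists phi : 'I_p -> 'I_n,
    [/\ injective phi, [set phi x | x : 'I_p] = A &
        forall g : {perm 'I_n}, g \in K <->
          (perm_on A g /\
           exists2 s, s \in dihedral_nat p & forall x, g (phi x) = phi (s x))].

Notation restrG A H := (restr_perm A @* H)%g.

(* Main.v *)
Require Import Defs.
From mathcomp Require Import all_boot all_fingroup all_solvable.
From mathcomp Require Import zify.
Set Implicit Arguments. Unset Strict Implicit. Unset Printing Implicit Defensive.
Local Open Scope group_scope.


Definition liftf (p n : nat) (phi : 'I_p -> 'I_n) (s : {perm 'I_p}) (y : 'I_n) : 'I_n :=
  if [pick z | phi z == y] is Some z then phi (s z) else y.

Lemma liftf_phi p n (phi : 'I_p -> 'I_n) s x : injective phi -> liftf phi s (phi x) = phi (s x).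
Proof.
move=> inj; rewrite /liftf; case: pickP => [z /eqP/inj -> //|/(_ x)]; by rewrite eqxx.
Qed.

Lemma liftf_out p n (phi : 'I_p -> 'I_n) s y : (forall x, phi x != y) -> liftf phi s y = y.
Proof.
move=> h; rewrite /liftf; case: pickP => [z /eqP zy|//]; by move: (h z); rewrite zy eqxx.
Qed.

Lemma liftf_inj p n (phi : 'I_p -> 'I_n) s : injective phi -> injective (liftf phi s).
Proof.
move=> inj y1 y2.
have [[x1 <-]|h1] : (exists x, phi x = y1) \/ (forall x, phi x != y1).
  by case: (pickP (fun z => phi z == y1)) => [z /eqP|h]; [left; exists z|right=> x; rewrite h].
- have [[x2 <-]|h2] : (exists x, phi x = y2) \/ (forall x, phi x != y2).
    by case: (pickP (fun z => phi z == y2)) => [z /eqP|h]; [left; exists z|right=> x; rewrite h].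
  + by rewrite !liftf_phi // => /inj /perm_inj ->.
  + by rewrite liftf_phi // liftf_out // => e; move: (h2 (s x1)); rewrite e eqxx.
- have [[x2 <-]|h2] : (exists x, phi x = y2) \/ (forall x, phi x != y2).
    by case: (pickP (fun z => phi z == y2)) => [z /eqP|h]; [left; exists z|right=> x; rewrite h].
  + by rewrite liftf_phi // liftf_out // => e; move: (h1 (s x2)); rewrite e eqxx.
  + by rewrite !liftf_out.
Qed.

Definition liftP p n (phi : 'I_p -> 'I_n) (inj : injective phi) s : {perm 'I_n} :=
  perm (@liftf_inj p n phi s inj).

Lemma liftP_phi p n (phi : 'I_p -> 'I_n) (inj : injective phi) s x :
  liftP inj s (phi x) = phi (s x).
Proof. by rewrite permE liftf_phi. Qed.

Lemma liftP_out p n (phi : 'I_p -> 'I_n) (inj : injective phi) s y :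
  (forall x, phi x != y) -> liftP inj s y = y.
Proof. by move=> h; rewrite permE liftf_out. Qed.

Definition reflf p (lt0p : 0 < p) (x : 'I_p) : 'I_p := Ordinal (ltn_pmod (p - x) lt0p).

Lemma reflf_inj p (lt0p : 0 < p) : injective (reflf lt0p).
Proof.
move=> x y /(congr1 val) /= e; apply: val_inj => /=.
have hx := ltn_ord x; have hy := ltn_ord y.
case: (posnP x) e => [->|x0]; case: (posnP y) => [->|y0] //; rewrite ?subn0 ?modnn.
- by rewrite modn_small => [/eqP|]; lia.
- by rewrite modn_small => [/eqP|]; lia.
- rewrite !modn_small; lia.
Qed.

Lemma card_dih p n (A : {set 'I_n}) (K : {group {perm 'I_n}}) :
  prime p -> odd p -> #|A| = p -> perm_iso_dihedral p A K ->
  (forall x, x \in A -> orbit 'P K x = A) -> #|K| = (2 * p)%N.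
Proof.
move=> pr op cA [phi [inj imA iso]] htr.
have p2 : 2 < p by move: (prime_gt1 pr) op; case: p {pr cA iso phi inj imA htr} => [|[|[|]]].
have lt0p : 0 < p by lia.
have lt1p : 1 < p by lia.
pose z0 : 'I_p := Ordinal lt0p.
pose z1 : 'I_p := Ordinal lt1p.
pose s0 : {perm 'I_p} := perm (@reflf_inj p lt0p).
pose t := liftP inj s0.
have phiA x : phi x \in A by rewrite -imA; apply/imsetP; exists x.
have notA y : y \notin A -> forall x, phi x != y.
  by move=> yA x; apply: contraNneq yA => <-.
have inA y : y \in A -> exists x, y = phi x.
  by rewrite -imA => /imsetP [x _ ->]; exists x.
have tK : t \in K.
  apply/iso; split.
    apply/subsetP => y; rewrite inE; apply: contraR => /notA h.
    by rewrite liftP_out // eqxx.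
  exists s0; last by move=> x; rewrite liftP_phi.
  rewrite inE; apply/orP; right; apply/existsP; exists z0; apply/forallP => x.
  by rewrite permE /= add0n.
have gE g : g \in K -> g (phi z0) = phi z0 -> g = 1 \/ g = t.
  move/iso => [gon [s sD gs]] g0.
  have s00 : s z0 = z0 by apply: (inj); rewrite -gs.
  move: sD; rewrite inE => /orP [/existsP [b /forallP hb] | /existsP [b /forallP hb]].
  - left.
    have b0 : val b = 0.
      by move: (hb z0); rewrite s00 /= addn0 modn_small // => /eqP.
    apply/permP => y; rewrite perm1.
    case: (boolP (y \in A)) => [/inA [x ->]| yA]; last by rewrite (out_perm gon).
    rewrite gs; congr phi; apply: val_inj; move/eqP: (hb x); rewrite b0 add0n modn_small //.
  - right.
    have b0 : val b = 0.
      by move: (hb z0); rewrite s00 /= subn0 modnDr modn_small // => /eqP.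
    apply/permP => y.
    case: (boolP (y \in A)) => [/inA [x ->]| yA].
      rewrite gs liftP_phi; congr phi; apply: val_inj.
      by rewrite (eqP (hb x)) b0 add0n permE.
    by rewrite (out_perm gon) // liftP_out //; apply: notA.
have tn1 : t != 1.
  apply/eqP => e; move: (liftP_phi inj s0 z1); rewrite -/t e perm1 => /inj /(congr1 val).
  rewrite permE /= modn_small; lia.
have C2 : 'C_K[phi z0 | 'P] = [set 1; t].
  apply/eqP; rewrite eqEsubset; apply/andP; split.
    apply/subsetP => g; rewrite in_setI => /andP [gK /astab1P gf].
    by case: (gE g gK gf) => ->; rewrite !inE eqxx ?orbT.
  apply/subsetP => g /set2P [-> | ->]; apply/setIP; split.
  - exact: group1.
  - by apply/astab1P; rewrite /= apermE perm1.
  - exact: tK.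
  by apply/astab1P; rewrite /= apermE liftP_phi permE; congr phi; apply: val_inj; rewrite /= subn0 modnn.
by rewrite -(card_orbit_stab 'P K (phi z0)) C2 cards2 eq_sym tn1 (htr _ (phiA z0)) cA mulnC.
Qed.

Lemma orbit_restr n (A : {set 'I_n}) (H : {group {perm 'I_n}}) x :
  H \subset 'N(A | 'P) -> x \in A -> orbit 'P (restr_perm A @* H) x = orbit 'P H x.
Proof.
move=> nH xA; rewrite /orbit morphimEsub // -imset_comp.
by apply: eq_in_imset => h hH /=; rewrite !apermE restr_permE // (subsetP nH).
Qed.

Lemma perm_on_norm n (A : {set 'I_n}) g : perm_on A g -> g \in 'N(A | 'P).
Proof. by move=> gon; apply/astabsP => x; rewrite /= apermE (perm_closed _ gon). Qed.

Lemma restr_perm_id n (A : {set 'I_n}) g : perm_on A g -> restr_perm A g = g.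
Proof.
move=> gon; apply/permP => y; case: (boolP (y \in A)) => yA.
  by rewrite restr_permE // perm_on_norm.
by rewrite (out_perm (restr_perm_on _ _)) // (out_perm gon).
Qed.

Lemma restr_perm_disj n (A B : {set 'I_n}) g : perm_on B g ->
  (forall y, y \in A -> y \notin B) -> g \in 'N(A | 'P) /\ restr_perm A g = 1.
Proof.
move=> gon dAB.
have fixA y : y \in A -> g y = y by move=> yA; rewrite (out_perm gon) // dAB.
have nA : g \in 'N(A | 'P).
  apply/astabsP => y; rewrite /= apermE.
  case: (boolP (y \in A)) => yA; first by rewrite fixA.
  have [yB|yB] := boolP (y \in B); last by rewrite (out_perm gon) // (negbTE yA).
  apply/negbTE; apply: contraL yB => /dAB.
  by rewrite (perm_closed _ gon).
split=> //; apply/permP => y; rewrite perm1; case: (boolP (y \in A)) => yA.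
  by rewrite restr_permE // fixA.
by rewrite (out_perm (restr_perm_on _ _)).
Qed.

Lemma prod_restr n k (Om : 'I_k -> {set 'I_n}) (x : {perm 'I_n}) (s : seq 'I_k) :
  uniq s -> (forall i j y, y \in Om i -> y \in Om j -> i = j) ->
  (forall i, x \in 'N(Om i | 'P)) ->
  forall y, (\prod_(i <- s) restr_perm (Om i) x) y =
            if has (fun i => y \in Om i) s then x y else y.
Proof.
move=> us disj nx; elim: s us => [|a s IH] /=; first by move=> _ y; rewrite big_nil perm1.
case/andP => nas us y; rewrite big_cons permM.
case: (boolP (y \in Om a)) => ya /=.
  have xya : x y \in Om a by move/astabsP: (nx a) => h; move: (h y); rewrite /= apermE ya.
  rewrite restr_permE // IH //.
  case: ifP => // /hasP [j js xyj].
  by move: nas; rewrite (disj _ _ _ xya xyj) js.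
by rewrite (out_perm (restr_perm_on _ _)) // IH.
Qed.

Lemma prod_restr_all n k (Om : 'I_k -> {set 'I_n}) (x : {perm 'I_n}) :
  (forall i j y, y \in Om i -> y \in Om j -> i = j) ->
  (forall y, exists i, y \in Om i) ->
  (forall i, x \in 'N(Om i | 'P)) ->
  x = \prod_(i < k) restr_perm (Om i) x.
Proof.
move=> disj cov nx; apply/permP => y.
rewrite (prod_restr (index_enum_uniq _) disj nx).
case: ifP => // /hasPn; case: (cov y) => i yi /(_ i).
by rewrite mem_index_enum yi => /(_ isT).
Qed.

Theorem lemma7p1 (p k n : nat) (H : {group {perm 'I_n}})
  (Omega : 'I_k -> {set 'I_n}) (G : 'I_k -> {group {perm 'I_n}})
  (Hp H2 : {group {perm 'I_n}}) :
  prime p -> odd p -> n = (p * k)%N ->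
  injective Omega ->
  [set orbit 'P H x | x : 'I_n] = [set Omega i | i : 'I_k] ->
  (forall i, #|Omega i| = p) ->
  (forall i, perm_iso_dihedral p (Omega i) (restrG (Omega i) H)) ->
  (forall i, G i \in 'Syl_p(restrG (Omega i) H)) ->
  Hp \in 'Syl_p(H) -> H2 \in 'Syl_2(H) ->
  let Gprod := <<\bigcup_(i < k) G i>> in
  (* (1) *)
  [/\ Hp ><| H2 = H, (H :&: Gprod) ><| H2 = H & 'N(H) \subset 'N(Hp)]
  (* (2) *)
  /\ [/\ Hp \subset Gprod, (forall i, restrG (Omega i) Hp = G i),
         (forall i x, x \in Omega i -> orbit 'P Hp x = Omega i) &
         (forall i, cyclic (restrG (Omega i) Hp) /\ #|restrG (Omega i) Hp| = p)]
  (* (3) *)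
  /\ (forall i, exists2 a, a \in Omega i &
        restrG (Omega i) H2 = 'C_(restrG (Omega i) H)[a | 'P]).
Proof.
move=> pr op nE injO orbE cardO isoD sylG sylHp sylH2 Gprod.
have p2 : 2 < p by move: (prime_gt1 pr) op; case: (p) => [|[|[|]]].
have p0 : 0 < p by lia.
have sylG' i : p.-Sylow(restrG (Omega i) H) (G i) by move: (sylG i); rewrite inE.
have sHp : p.-Sylow(H) Hp by move: sylHp; rewrite inE.
have sH2 : 2.-Sylow(H) H2 by move: sylH2; rewrite inE.
have Oorb i : exists y, Omega i = orbit 'P H y.
  have : Omega i \in [set Omega i | i : 'I_k] by apply/imsetP; exists i.
  by rewrite -orbE => /imsetP [y _ ->]; exists y.
have Otr i x : x \in Omega i -> orbit 'P H x = Omega i.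
  by case: (Oorb i) => y -> /orbit_eqP.
have cov y : exists i, y \in Omega i.
  have : orbit 'P H y \in [set Omega i | i : 'I_k] by rewrite -orbE; apply/imsetP; exists y.
  by case/imsetP => i _ e; exists i; rewrite -e orbit_refl.
have disj i j y : y \in Omega i -> y \in Omega j -> i = j.
  by move=> yi yj; apply: injO; rewrite -(Otr i y yi) -(Otr j y yj).
have nH i : H \subset 'N(Omega i | 'P).
  by case: (Oorb i) => y ->; apply: acts_orbit; exact: subsetT.
have Dtr i x : x \in Omega i -> orbit 'P (restrG (Omega i) H) x = Omega i.
  by move=> xi; rewrite orbit_restr // (Otr i x xi).
have cD i : #|restrG (Omega i) H| = (2 * p)%N.
  exact: (card_dih pr op (cardO i) (isoD i) (Dtr i)).
have stab2 i x : x \in Omega i -> #|'C_(restrG (Omega i) H)[x | 'P]| = 2.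
  move=> xi; move: (card_orbit_stab 'P (restrG (Omega i) H) x).
  rewrite Dtr // cD cardO [(2 * p)%N]mulnC => /eqP; rewrite eqn_pmul2l //; exact/eqP.
have part_p : ((2 * p)`_p)%N = p.
  rewrite partnM // part_p'nat ?part_pnat_id ?pnat_id ?mul1n //.
  by rewrite pnatE // inE /= neq_ltn p2.
have part_2 : ((2 * p)`_2)%N = 2.
  rewrite partnM // (part_pnat_id (pnat_id (isT : prime 2))) part_p'nat ?muln1 //.
  by rewrite pnatE // inE /= neq_ltn p2 orbT.
have cG i : #|G i| = p by rewrite (card_Hall (sylG' i)) cD part_p.
have iG i : #|restrG (Omega i) H : G i| = 2.
  by rewrite -divgS ?(pHall_sub (sylG' i)) // cD cG mulnK.
have nG i : G i <| restrG (Omega i) H.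
  by apply: index2_normal; [exact: pHall_sub (sylG' i) | exact: iG].
pose K := (H :&: \bigcap_(i < k) (restr_perm (Omega i) @*^-1 G i))%G.
have memK x : x \in H -> (x \in K) = [forall i, restr_perm (Omega i) x \in G i].
  move=> xH; rewrite inE xH /=; apply/bigcapP/forallP => [h i | h i _].
    by case/morphpreP: (h i isT).
  by apply: mem_morphpre; [exact: subsetP (nH i) x xH | exact: h].
have KH : K \subset H by exact: subsetIl.
have Kp : p.-group K.
  rewrite -pnat_exponent; apply: pnat_dvd (pnat_id pr); apply/exponentP => x xK.
  have xH := subsetP KH x xK; move: xK; rewrite memK // => /forallP xG.
  apply/permP => y; rewrite perm1; case: (cov y) => i yi.
  have xN := subsetP (nH i) x xH.
  rewrite -(restr_permE (groupX p xN) yi) morphX // -(cG i) expg_cardG //.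
  exact: perm1.
  exact: xG.
have pK x : x \in H -> p.-elt x -> x \in K.
  move=> xH px; rewrite memK //; apply/forallP => i.
  have xN := subsetP (nH i) x xH.
  rewrite (mem_normal_Hall (sylG' i) (nG i)) ?mem_morphim //.
  exact: morph_p_elt.
have SylK (P : {group {perm 'I_n}}) : p.-Sylow(H) P -> P :=: K.
  move=> sP; symmetry; apply: (sub_pHall sP Kp _ KH).
  apply/subsetP => x xP; apply: pK; first exact: subsetP (pHall_sub sP) x xP.
  exact: mem_p_elt (pHall_pgroup sP) xP.
have HpK : Hp :=: K := SylK Hp sHp.
have NHp : 'N(H) \subset 'N(Hp).
  apply/subsetP => g gN; apply/normP.
  have h : p.-Sylow(H) (Hp :^ g)%G by rewrite /= -{1}(normP gN) pHallJ2.
  by rewrite (SylK _ h) HpK.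
have nsHp : Hp <| H.
  by apply/andP; split; [exact: pHall_sub sHp | exact: subset_trans (normG H) NHp].
have sq h : h \in H -> h ^+ 2 \in Hp.
  move=> hH; rewrite HpK memK ?groupX //; apply/forallP => i.
  have hN := subsetP (nH i) h hH.
  have xD : restr_perm (Omega i) h \in restrG (Omega i) H by rewrite mem_morphim.
  have nGi := normal_norm (nG i).
  rewrite morphX //; apply: coset_idr; first by rewrite groupX // (subsetP nGi).
  have cq : #|restrG (Omega i) H / G i| = 2 by rewrite card_quotient // iG.
  by rewrite morphX ?(subsetP nGi) // -cq expg_cardG // mem_quotient.
have ix2 : 2.-nat #|H : Hp|.
  rewrite -card_quotient ?normal_norm //; suff : 2.-group (H / Hp) by []; rewrite -pnat_exponent.
  apply: pnat_dvd (pnat_id (isT : prime 2)); apply/exponentP => c.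
  case/morphimP => h hN hH ->; rewrite -morphX //.
  by apply: coset_id; exact: sq.
have sd1 : Hp ><| H2 = H.
  apply/(sdprod_normal_pHallP nsHp sH2); apply/and3P; split.
  - exact: pHall_sub sHp.
  - by apply: pi_pgroup (pHall_pgroup sHp) _; rewrite inE /= neq_ltn p2 orbT.
  - by rewrite pnatNK.
have GsubK : Gprod \subset \bigcap_(i < k) (restr_perm (Omega i) @*^-1 G i).
  rewrite gen_subG; apply/bigcupsP => j _; apply/bigcapsP => i _.
  apply/subsetP => g gGj.
  have gD := subsetP (pHall_sub (sylG' j)) g gGj.
  have gon : perm_on (Omega j) g.
    by case/morphimP: gD => h _ _ ->; exact: restr_perm_on.
  case: (eqVneq i j) => [-> | neq].
    by apply: mem_morphpre; [exact: perm_on_norm | rewrite /= restr_perm_id].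
  have dAB y : y \in Omega i -> y \notin Omega j.
    by move=> yi; apply/negP => yj; move: neq; rewrite (disj i j y yi yj) eqxx.
  have [nA r1] := restr_perm_disj gon dAB.
  by apply: mem_morphpre => //; rewrite /= r1 group1.
have HpG : Hp \subset Gprod.
  apply/subsetP => x xHp.
  have xH := subsetP (pHall_sub sHp) x xHp.
  have : x \in K by rewrite -HpK.
  rewrite memK // => /forallP xG.
  rewrite (prod_restr_all disj cov (fun i => subsetP (nH i) x xH)).
  apply: group_prod => i _; apply: mem_gen; apply/bigcupP; exists i => //.
have HGp : H :&: Gprod = Hp.
  apply/eqP; rewrite eqEsubset; apply/andP; split; last first.
    by rewrite subsetI (pHall_sub sHp) HpG.
  rewrite HpK; apply/subsetP => x /setIP [xH xG]; rewrite memK //.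
  apply/forallP => i.
  by have /bigcapP/(_ i isT)/morphpreP [_ ->] := subsetP GsubK x xG.
have rHp i : restrG (Omega i) Hp = G i.
  have nHp := subset_trans (pHall_sub sHp) (nH i).
  have hall : p.-Sylow(restrG (Omega i) H) (restrG (Omega i) Hp).
    by apply: morphim_pHall.
  apply/eqP; rewrite eqEcard.
  rewrite (sub_normal_Hall (sylG' i) (nG i) (pHall_sub hall)) (pHall_pgroup hall) /=.
  by rewrite (card_Hall hall) (card_Hall (sylG' i)).
split; first by split => //; rewrite HGp.
split; last first.
  move=> i.
  have sH2i : 2.-Sylow(restrG (Omega i) H) (restrG (Omega i) H2).
    have nH2 := subset_trans (pHall_sub sH2) (nH i).
    by apply: morphim_pHall.
  have cS : #|restrG (Omega i) H2| = 2 by rewrite (card_Hall sH2i) cD part_2.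
  have SD := pHall_sub sH2i.
  have actS : [acts restrG (Omega i) H2, on Omega i | 'P].
    apply/subsetP => g /(subsetP SD).
    by case/morphimP => h _ _ ->; apply: perm_on_norm; exact: restr_perm_on.
  have := pgroup_fix_mod (pHall_pgroup sH2i) actS; rewrite cardO.
  case: (set_0Vmem 'Fix_(Omega i | 'P)(restrG (Omega i) H2)) => [-> | [a]].
    by rewrite cards0 => /eqP; rewrite mod0n modn2 op.
  move=> /setIP [ai /afixP fa] _; exists a => //.
  apply/eqP; rewrite eqEcard cS stab2 // leqnn andbT subsetI SD /=.
  by apply/subsetP => g gS; apply/astab1P; exact: fa.
split => //.
- move=> i x xi.
  have nHp := subset_trans (pHall_sub sHp) (nH i).
  apply/eqP; rewrite eqEcard; apply/andP; split.
    by rewrite -(Otr i x xi) /orbit; apply: imsetS; exact: pHall_sub sHp.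
  rewrite cardO -(orbit_restr nHp xi) rHp.
  have := card_orbit_stab 'P (G i) x; rewrite cG.
  have cs : #|'C_(G i)[x | 'P]| = 1%N.
    have dv : #|'C_(G i)[x | 'P]| %| p by rewrite -(cG i) cardSg ?subsetIl.
    have le : #|'C_(G i)[x | 'P]| <= 2.
      by rewrite -(stab2 i x xi) subset_leq_card // setSI // (pHall_sub (sylG' i)).
    case/primeP: pr => _ /(_ _ dv) /orP [/eqP // | /eqP e].
    by rewrite e in le; move: p2; rewrite ltnNge le.
  by rewrite cs muln1 => ->.
- move=> i; rewrite rHp; split; last exact: cG.
  by apply: prime_cyclic; rewrite cG.
Qed.
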